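(* For every positive integer $N$ and all real $x,\delta\ge0$, \[ |\varrho_N(x)|\le\exp\!\left(-\frac{\pi^2\delta^2}{2}\cdot\#\mathcal{S}_1(N,\delta,x)\right). \]
   Context: For a positive integer $N$ and real $x$, $\varrho_N(x):=\prod_{n=1}^N\cos(\pi x/n)$. For $y\in\mathbb{R}$, $\|y\|$ denotes the distance from $y$ to the nearest integer. For positive integers $k,N$ and real $\delta,x\ge0$, $\mathcal{S}_k(N,\delta,x):=\{n\in\{1,\dots,N\} : \|x/n^k\|\ge\delta\}$. *)

(* Defs.v *)
From Stdlib Require Import Reals Lra Lia List.
Open Scope R_scope.

Fixpoint rho (N : nat) (x : R) : R :=
  match N with
  | O => 1
  | S m => rho m x * cos (PI * x / INR (S m))
  end.

Definition dist_int (y : R) : R :=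
  Rmin (y - IZR (Int_part y)) (IZR (Int_part y) + 1 - y).

Definition S_set (k N : nat) (delta x : R) : list nat :=
  filter (fun n => if Rle_dec delta (dist_int (x / (INR n ^ k))) then true else false)
         (seq 1 N).

(* Main.v *)
Require Import Defs.
From Stdlib Require Import Reals List.
From Stdlib Require Import Lra Lia.
Open Scope R_scope.

Lemma cos_exp (t : R) : 0 <= t -> t <= PI / 2 -> cos t <= exp (- (t ^ 2 / 2)).
Proof.
  intros H0 H1.
  assert (HP : PI <= 4) by (pose proof PI_4; lra).
  destruct (cos_bound t 0) as [_ Hc]; try lra.
  assert (Ha : cos_approx t (2 * (0 + 1)) = 1 - t^2/2 + t^4/24)
    by (unfold cos_approx, cos_term; simpl; field).
  rewrite Ha in Hc.
  set (u := t ^ 2 / 2).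
  assert (Hu0 : 0 <= u) by (unfold u; nra).
  assert (Hu1 : u <= 2) by (unfold u; nra).
  assert (He : exp (- u) = exp (- u / 3) ^ 3).
  { simpl. rewrite Rmult_1_r, <- !exp_plus. f_equal. field. }
  pose proof (exp_ineq1_le (- u / 3)) as Hl.
  assert (Hb : (1 + - u / 3) ^ 3 <= exp (- u / 3) ^ 3).
  { apply pow_incr. lra. }
  assert (t ^ 4 = 4 * u ^ 2) by (unfold u; field).
  assert (Hx : 1 - u + u^2/6 <= (1 + - u / 3) ^ 3).
  { assert (0 <= u^2 * (1/6 - u/27)) by (apply Rmult_le_pos; nra). nra. }
  rewrite He. nra.
Qed.

Lemma cos_shift_nat (th : R) (n : nat) :
  Rabs (cos (th + INR n * PI)) = Rabs (cos th).
Proof.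
  induction n.
  - simpl. f_equal. f_equal. ring.
  - rewrite S_INR.
    replace (th + (INR n + 1) * PI) with ((th + INR n * PI) + PI) by ring.
    rewrite neg_cos, Rabs_Ropp. exact IHn.
Qed.

Lemma cos_shift (th : R) (k : Z) :
  Rabs (cos (th + IZR k * PI)) = Rabs (cos th).
Proof.
  destruct (Z.le_ge_cases 0 k) as [Hk|Hk].
  - replace k with (Z.of_nat (Z.to_nat k)) by lia.
    rewrite <- INR_IZR_INZ. apply cos_shift_nat.
  - replace k with (- Z.of_nat (Z.to_nat (- k)))%Z by lia.
    rewrite opp_IZR, <- INR_IZR_INZ.
    set (m := INR _).
    rewrite <- (cos_shift_nat (th + - m * PI) (Z.to_nat (- k))).
    unfold m. f_equal. f_equal. ring.
Qed.

Lemma dist_bounds (y : R) : 0 <= dist_int y <= 1/2.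
Proof.
  unfold dist_int. pose proof (base_Int_part y).
  unfold Rmin; destruct Rle_dec; lra.
Qed.

Lemma key (y : R) : Rabs (cos (PI * y)) <= exp (- (PI ^ 2 * dist_int y ^ 2 / 2)).
Proof.
  pose proof (dist_bounds y) as Hd.
  pose proof PI_RGT_0 as HPI.
  assert (Hc : Rabs (cos (PI * y)) = cos (PI * dist_int y)).
  { pose proof (base_Int_part y) as Hb.
    set (k := Int_part y) in *.
    assert (E : Rabs (cos (PI * y)) = Rabs (cos (PI * (y - IZR k)))).
    { rewrite <- (cos_shift (PI * (y - IZR k)) k). f_equal. f_equal. ring. }
    rewrite E. unfold dist_int. fold k. unfold Rmin. destruct Rle_dec.
    - apply Rabs_right. apply Rle_ge, cos_ge_0; nra.
    - replace (PI * (IZR k + 1 - y)) with (- (PI * (y - IZR k)) + PI) by ring.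
      rewrite neg_cos, cos_neg, Rabs_left1; [ring|].
      assert (0 <= cos (PI * (IZR k + 1 - y))) by (apply cos_ge_0; nra).
      replace (PI * (IZR k + 1 - y)) with (- (PI * (y - IZR k)) + PI) in H by ring.
      rewrite neg_cos, cos_neg in H. lra. }
  rewrite Hc.
  replace (PI ^ 2 * dist_int y ^ 2 / 2) with ((PI * dist_int y) ^ 2 / 2) by (unfold Rdiv; ring).
  apply cos_exp; nra.
Qed.

Lemma gen (N : nat) (x delta : R) : 0 <= delta ->
  Rabs (rho N x) <=
  exp (- (PI ^ 2 * delta ^ 2 / 2) * INR (length (S_set 1 N delta x))).
Proof.
  intro Hdel.
  induction N.
  - simpl. rewrite Rmult_0_r, exp_0, Rabs_R1. lra.
  - unfold S_set in *. rewrite seq_S, filter_app, length_app, plus_INR.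
    cbn [rho]. rewrite Rabs_mult.
    rewrite Rmult_plus_distr_l, exp_plus.
    apply Rmult_le_compat; try apply Rabs_pos; auto.
    replace (PI * x / INR (S N)) with (PI * (x / INR (S N))) by (unfold Rdiv; ring).
    cbn [filter].
    replace (INR (1 + N) ^ 1) with (INR (S N)) by (rewrite pow_1; f_equal).
    pose proof (key (x / INR (S N))) as Hk.
    destruct Rle_dec as [Hle|Hle]; cbn [length].
    + eapply Rle_trans; [exact Hk|]. apply exp_le3 || idtac.
      rewrite exp_le_exp ||  idtac.
      apply Rlt_le in Hle || idtac.
      assert (delta ^ 2 <= dist_int (x / INR (S N)) ^ 2) by (idtac "HERE"; match goal with H: _ |- _ => idtac end; pose proof (dist_bounds (x / INR (S N))); nra).
      assert (0 <= PI ^ 2) by (pose proof PI_RGT_0; nra).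
      destruct (Rle_lt_or_eq_dec _ _ (ltac:(simpl (INR 1); nra) : - (PI ^ 2 * dist_int (x / INR (S N)) ^ 2 / 2) <= - (PI ^ 2 * delta ^ 2 / 2) * INR 1)) as [Hl|Hl].
      * left. apply exp_increasing. exact Hl.
      * right. rewrite Hl. reflexivity.
    + change (INR 0) with 0. rewrite Rmult_0_r, exp_0.
      destruct (COS_bound (PI * (x / INR (S N)))). apply Rabs_le. lra.
Qed.

Theorem lemma3p1 (N : nat) (x delta : R) :
  (1 <= N)%nat -> 0 <= x -> 0 <= delta ->
  Rabs (rho N x) <=
  exp (- (PI ^ 2 * delta ^ 2 / 2) * INR (length (S_set 1 N delta x))).
Proof.
  intros _ _ H. apply gen. exact H.
Qed.
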